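(* Let $r,m\in\mathbb{N}$ with $r\ge1$, and let $G$ be a graph in which every vertex has finite $(r,m)$-rank. Then $\mathrm{adm}_r(G)\le m$.
   Context: Admissibility: for a linear order $\le$ on $V(G)$, the $r$-backconnectivity of a vertex $v$ is the maximum number of paths with at least one and at most $r$ edges that start at $v$, end at vertices $w\ge v$, and are pairwise vertex-disjoint except for their common endpoint $v$. $\mathrm{adm}_r(G)$ is the minimum over all linear orders of $V(G)$ of the maximum $r$-backconnectivity of a vertex. $N_r^G(v)$ is the closed $r$-neighborhood of $v$; $G-S$ is the subgraph induced on $V(G)\setminus S$. The $(r,m)$-rank of vertices of $G$ (values in $\mathbb{N}\cup\{\infty\}$) is defined by: initially every vertex has rank $\infty$; in rounds $i=1,2,\dots$, every vertex $v$ currently of rank $\infty$ receives rank $i$ if there exists $S\subseteq V(G)\setminus\{v\}$ with $|S|\le m$ such that every vertex of $N_r^{G-S}(v)\setminus\{v\}$ received a finite rank in rounds $1,\dots,i-1$; the procedure stops when all ranks are finite or a round assigns no new rank. *)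

(* Defs.v *)
From HB Require Import structures.
From mathcomp Require Import all_boot.
From mathcomp Require Import fingroup perm.
From mathcomp Require Import boolp.
Set Implicit Arguments. Unset Strict Implicit. Unset Printing Implicit Defensive.

Definition simple_graph (T : finType) (e : rel T) : Prop :=
  symmetric e /\ irreflexive e.

Section Defs.
Variables (T : finType) (e : rel T).

(* closed k-neighbourhood of v in G - S (v assumed not in S):
   vertices reachable from v by a walk of at most k edges avoiding S *)
Fixpoint nbhd_del (S : {set T}) (k : nat) (v : T) : {set T} :=
  match k with
  | 0 => [set v]
  | k'.+1 => nbhd_del S k' v :|:
             [set u | (u \notin S) && [exists w in nbhd_del S k' v, e w u]]
  end.

(* ranked r m i = set of vertices whose (r,m)-rank is finite and <= i *)
Fixpoint ranked (r m : nat) (i : nat) : {set T} :=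
  match i with
  | 0 => set0
  | i'.+1 => ranked r m i' :|:
      [set v | [exists S : {set T},
                 [&& v \notin S, #|S| <= m &
                     (nbhd_del S r v :\ v) \subset ranked r m i']]]
  end.

Definition finite_rank (r m : nat) (v : T) : Prop := exists i, v \in ranked r m i.

(* linear orders on T, represented by permutations sigma of T:
   x <=_sigma y iff the enumeration rank of sigma x is <= that of sigma y *)
Definition ord_le (sigma : {perm T}) (x y : T) : bool :=
  (enum_rank (sigma x) <= enum_rank (sigma y))%N.

Definition back_path (sigma : {perm T}) (r : nat) (v : T) (p : seq T) : bool :=
  match p with
  | [::] => false
  | x :: q => [&& x == v, 0 < size q <= r, path e v q, uniq p &
                  ord_le sigma v (last v q)]
  end.

Definition back_family (sigma : {perm T}) (r : nat) (v : T) (n : nat) : Prop :=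
  exists s : seq (seq T),
    [/\ size s = n, all (back_path sigma r v) s &
        forall i j x, (i < j < size s)%N ->
          x \in nth [::] s i -> x \in nth [::] s j -> x = v].

(* r-backconnectivity (the number of such paths is always <= #|T|, since the
   endpoints are pairwise distinct, so the maximum is taken over n <= #|T|) *)
Definition backconn (sigma : {perm T}) (r : nat) (v : T) : nat :=
  \max_(n < #|T|.+1 | `[< back_family sigma r v n >]) n.

Definition adm (r : nat) : nat :=
  \big[minn/#|T|]_(sigma : {perm T}) \max_(v : T) backconn sigma r v.

End Defs.

(* Main.v *)
Require Import Defs.
From mathcomp Require Import all_boot fingroup perm.
From mathcomp Require Import boolp.

Lemma nbhd_self (T : finType) (e : rel T) (S : {set T}) k v : v \in nbhd_del e S k v.
Proof. elim: k => [|k IH] /=; [by rewrite inE | by rewrite inE IH]. Qed.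

Lemma nbhd_path (T : finType) (e : rel T) (S : {set T}) v (q : seq T) :
  forall k, path e v q -> all (fun u => u \notin S) q -> size q <= k ->
  last v q \in nbhd_del e S k v.
Proof.
elim/last_ind: q => [|q x IH] k /=; first by move=> *; exact: nbhd_self.
rewrite rcons_path all_rcons last_rcons size_rcons => /andP[pq ex] /andP[xS aq].
case: k => [//|k] /= sk.
rewrite inE; apply/orP; right; rewrite inE xS /=.
apply/existsP; exists (last v q); rewrite ex andbT; exact: IH.
Qed.

Lemma sort_perm_exists (T : finType) (f : T -> nat) :
  exists sigma : {perm T}, forall v w, ord_le sigma v w -> f v <= f w.
Proof.
pose s := sort (fun x y => f x <= f y) (enum T).
have ps : perm_eq s (enum T) by rewrite perm_sort perm_refl.
have ins x : x \in s by rewrite (perm_mem ps) mem_enum.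
have lt x : index x s < #|T| by rewrite cardE -(perm_size ps) index_mem.
pose g x := enum_val (Ordinal (lt x)).
have ginj : injective g.
  move=> x y /(congr1 enum_rank); rewrite !enum_valK => /(congr1 val) /= h.
  by rewrite -(nth_index x (ins x)) h nth_index.
exists (perm ginj) => v w; rewrite /ord_le !permE /g !enum_valK /= => h.
have srt : sorted (fun x y => f x <= f y) s.
  by apply: sort_sorted => x y; exact: leq_total.
have := @sorted_leq_nth _ (fun x y => f x <= f y) _ _ v s srt (index v s) (index w s).
rewrite !inE !index_mem !ins !nth_index // => H; apply: H => //.
  by move=> a b c; exact: leq_trans.
Qed.

Lemma bigmin_le (I : finType) (F : I -> nat) d x :
  \big[minn/d]_(i : I) F i <= F x.
Proof.
rewrite unlock; have : x \in index_enum I by rewrite mem_index_enum.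
elim: (index_enum I) => [//|a l IH] /=; rewrite inE => /orP[/eqP <-|xl].
  exact: geq_minl.
exact: leq_trans (geq_minr _ _) (IH xl).
Qed.

Theorem lemma3p7 (T : finType) (e : rel T) (r m : nat) :
  simple_graph e -> (1 <= r)%N ->
  (forall v : T, finite_rank e r m v) ->
  (adm e r <= m)%N.
Proof.
move=> _ _ hP.
pose rk v := ex_minn (hP v).
have rkP v : v \in ranked e r m (rk v) /\ forall i, v \in ranked e r m i -> rk v <= i.
  by rewrite /rk; case: ex_minnP.
have sep v : exists S : {set T}, [/\ v \notin S, #|S| <= m &
    forall u, u \in nbhd_del e S r v :\ v -> rk u < rk v].
  have [+ minv] := rkP v; case E: (rk v) => [|i]; first by rewrite inE.
  rewrite /= inE => /orP[h|]; first by have := minv _ h; rewrite E ltnn.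
  rewrite inE => /existsP[S /and3P[vS cS sub]]; exists S; split=> // u uN.
  rewrite ltnS; apply: (rkP u).2; exact: (subsetP sub).
have [sigma hs] := sort_perm_exists _ rk.
apply: leq_trans (bigmin_le _ _ _ sigma) _.
apply/bigmax_leqP => v _; apply/bigmax_leqP => n /asboolP [s [sz al dis]].
case: (sep v) => S [vS cS hS].
have hit i : i < size s -> exists x, (x \in S) && (x \in nth [::] s i).
  move=> lti; move/(all_nthP [::]): al => /(_ i lti).
  case: (nth [::] s i) => [//|y q] /and5P[/eqP-> /andP[q0 qr] pq uq ord].
  case: (boolP (has (mem S) q)) => [/hasP[x xq xS]|nh].
    by exists x; rewrite inE xq orbT andbT; exact: xS.
  have aq : all (fun u => u \notin S) q.
    apply/allP => u uin; apply/negP => uS; move/negP: nh; apply; apply/hasP; by exists u.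
  have lN := nbhd_path _ _ _ _ _ _ pq aq qr.
  have lv : last v q != v.
    move: uq q0; rewrite cons_uniq => /andP[vq _].
    case: q {pq aq qr ord lN nh} vq => [//|y' q'] vq _.
    apply/eqP => h; move: vq; rewrite -{1}h /=; by rewrite mem_last.
  have hlt : rk (last v q) < rk v by apply: hS; rewrite in_setD1 lv lN.
  have := hs _ _ ord; by rewrite leqNgt hlt.
pose g (i : 'I_n) := odflt v [pick x | (x \in S) && (x \in nth [::] s i)].
have gP (i : 'I_n) : (g i \in S) && (g i \in nth [::] s i).
  rewrite /g; case: pickP => [x //| H].
  have [|x hx] := hit i; first by rewrite sz ltn_ord.
  by rewrite H in hx.
have ginj : injective g.
  move=> i j eq; apply/val_inj; case: (ltngtP i j) => // h; exfalso.
  - have := dis i j (g i); rewrite h sz ltn_ord => /(_ erefl).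
    case/andP: (gP i) => gS gi; rewrite gi eq (andP (gP j)).2 => /(_ erefl erefl) gv.
    by move: gS; rewrite eq gv (negbTE vS).
  - have := dis j i (g j); rewrite h sz ltn_ord => /(_ erefl).
    case/andP: (gP j) => gS gj; rewrite gj -eq (andP (gP i)).2 => /(_ erefl erefl) gv.
    by move: gS; rewrite -eq gv (negbTE vS).
rewrite -[X in X <= _]card_ord -(card_imset _ ginj).
apply: leq_trans (subset_leq_card _) cS; apply/subsetP => x /imsetP[i _ ->].
by case/andP: (gP i).
Qed.
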